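(* Each of the functions $\theta\mapsto\mathbf{u}'(\theta)\cdot\mathbf{u}(\theta)$ and $\theta\mapsto\mathbf{v}'(\theta)\cdot\mathbf{v}(\theta)$ is either strictly positive on all of $(\theta^-,\theta^+)$ or strictly negative on all of $(\theta^-,\theta^+)$. Consequently $|\mathbf{u}(\theta)|$ and $|\mathbf{v}(\theta)|$ are strictly monotonic on $(\theta^-,\theta^+)$.
   Context: Design and mechanism parameterization. Fix $\mathbf{t}_1^r,\dots,\mathbf{t}_4^r\in\mathbb{R}^3$ with $\mathbf{t}_i^r\cdot(\mathbf{t}_j^r\times\mathbf{t}_k^r)\neq0$ for $ijk\in\{123,234,341,412\}$, $\mathrm{conv}\{\mathbf{0},\mathbf{t}_1^r,\mathbf{t}_2^r\}\cap\mathrm{conv}\{\mathbf{0},\mathbf{t}_3^r,\mathbf{t}_4^r\}=\{\mathbf{0}\}$, $\mathrm{conv}\{\mathbf{0},\mathbf{t}_1^r,\mathbf{t}_4^r\}\cap\mathrm{conv}\{\mathbf{0},\mathbf{t}_2^r,\mathbf{t}_3^r\}=\{\mathbf{0}\}$, and $\mathbf{u}_0:=\mathbf{t}_1^r-\mathbf{t}_3^r$, $\mathbf{v}_0:=\mathbf{t}_2^r-\mathbf{t}_4^r$ with $\mathbf{u}_0\cdot\mathbf{e}_3=\mathbf{v}_0\cdot\mathbf{e}_3=0$, $\mathbf{e}_3\cdot(\mathbf{u}_0\times\mathbf{v}_0)>0$. For nonzero $\mathbf{t}$ let $\mathbf{R}_{\mathbf{t}}(\varphi):=|\mathbf{t}|^{-2}\mathbf{t}\otimes\mathbf{t}+\cos\varphi(\mathbf{I}-|\mathbf{t}|^{-2}\mathbf{t}\otimes\mathbf{t})+|\mathbf{t}|^{-1}\sin\varphi(\mathbf{t}\times)$.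 Set $\mathbf{t}_2^d(\gamma):=\mathbf{R}_{\mathbf{t}_1^r}(\gamma)\mathbf{t}_2^r$, $\mathbf{t}_3^d(\theta):=\mathbf{R}_{\mathbf{t}_4^r}(\theta)\mathbf{t}_3^r$. $(\theta^-,\theta^+)$ is the maximal open interval containing $0$ on which there is a unique $C^1$ function $\gamma$ with $\gamma(0)=0$, $\mathbf{t}_2^d(\gamma(\theta))\cdot\mathbf{t}_3^d(\theta)=\mathbf{t}_2^r\cdot\mathbf{t}_3^r$ and with the four triple products of $(\mathbf{t}_1^r,\mathbf{t}_2^d(\gamma(\theta)),\mathbf{t}_3^d(\theta),\mathbf{t}_4^r)$ indexed by $ijk\in\{123,234,341,412\}$ having the same signs as those of $(\mathbf{t}_1^r,\dots,\mathbf{t}_4^r)$; $\gamma$ is analytic. Fix an analytic $\mathbf{R}_0:(\theta^-,\theta^+)\to SO(3)$ with $\mathbf{R}_0(0)=\mathbf{I}$ such that $\mathbf{t}_1(\theta):=\mathbf{R}_0(\theta)\mathbf{t}_1^r$, $\mathbf{t}_2(\theta):=\mathbf{R}_0(\theta)\mathbf{t}_2^d(\gamma(\theta))$, $\mathbf{t}_3(\theta):=\mathbf{R}_0(\theta)\mathbf{t}_3^d(\theta)$, $\mathbf{t}_4(\theta):=\mathbf{R}_0(\theta)\mathbf{t}_4^r$ give $\mathbf{u}(\theta):=\mathbf{t}_1(\theta)-\mathbf{t}_3(\theta)$, $\mathbf{v}(\theta):=\mathbf{t}_2(\theta)-\mathbf{t}_4(\theta)$ with $\mathbf{e}_3\cdot\mathbf{u}=\mathbf{e}_3\cdot\mathbf{v}=0$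 and $\mathbf{e}_3\cdot(\mathbf{u}\times\mathbf{v})>0$. Primes denote $d/d\theta$. *)

(* Defs.v *)
From mathcomp Require Import all_boot all_algebra all_classical all_reals all_analysis.
Import GRing.Theory Num.Theory numFieldTopology.Exports numFieldNormedType.Exports.
Set Implicit Arguments. Unset Strict Implicit. Unset Printing Implicit Defensive.
Local Open Scope ring_scope.
Local Open Scope classical_set_scope.

Section Defs.
Variable R : realType.
Notation vec := 'cV[R]_3.

Definition cx (v : vec) : R := v (inord 0) 0.
Definition cy (v : vec) : R := v (inord 1) 0.
Definition cz (v : vec) : R := v (inord 2) 0.

Definition dotp (u v : vec) : R := \sum_(i < 3) u i 0 * v i 0.
Definition crossp (u v : vec) : vec :=
  \col_(i < 3) (if i == inord 0 then cy u * cz v - cz u * cy v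
               else if i == inord 1 then cz u * cx v - cx u * cz v
               else cx u * cy v - cy u * cx v).
Definition vnorm (v : vec) : R := Num.sqrt (dotp v v).
Definition triple (a b c : vec) : R := dotp a (crossp b c).

Definition e3 : vec := \col_(i < 3) (if i == inord 2 then 1 else 0).

Definition crossmx (t : vec) : 'M[R]_3 := \matrix_(i < 3, j < 3)
  (crossp t (\col_(k < 3) (if k == j then 1 else 0))) i 0.

Definition rotR (t : vec) (phi : R) : 'M[R]_3 :=
  (vnorm t ^- 2) *: (t *m t^T)
  + cos phi *: (1%:M - (vnorm t ^- 2) *: (t *m t^T))
  + (vnorm t)^-1 * sin phi *: crossmx t.

Definition isSO3 (M : 'M[R]_3) : Prop := M^T *m M = 1%:M /\ \det M = 1.

Definition conv3 (a b c : vec) : set vec :=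
  [set x | exists l1 l2 l3 : R, 0 <= l1 /\ 0 <= l2 /\ 0 <= l3 /\ l1 + l2 + l3 = 1 /\
           x = l1 *: a + l2 *: b + l3 *: c].

Definition open_itv0 (I : set R) : Prop :=
  open I /\ I 0 /\ (forall x y z, I x -> I z -> x <= y -> y <= z -> I y).

Definition C1_on (I : set R) (f : R -> R) : Prop :=
  (forall x, I x -> derivable f x 1) /\
  (forall x, I x -> {for x, continuous (derive1 f)}).

Definition sign_pattern (a1 a2 a3 a4 : vec) : R * R * R * R :=
  (Num.sg (triple a1 a2 a3), Num.sg (triple a2 a3 a4),
   Num.sg (triple a3 a4 a1), Num.sg (triple a4 a1 a2)).

Section Mechanism.
Variables t1r t2r t3r t4r : vec.

Definition t2d (g : R) : vec := rotR t1r g *m t2r.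
Definition t3d (th : R) : vec := rotR t4r th *m t3r.

Definition admissible (I : set R) (g : R -> R) : Prop :=
  C1_on I g /\ g 0 = 0 /\
  (forall th, I th ->
     dotp (t2d (g th)) (t3d th) = dotp t2r t3r /\
     sign_pattern t1r (t2d (g th)) (t3d th) t4r = sign_pattern t1r t2r t3r t4r).

Definition unique_admissible (I : set R) : Prop :=
  (exists g, admissible I g) /\
  (forall g1 g2, admissible I g1 -> admissible I g2 -> forall th, I th -> g1 th = g2 th).

(* I = (theta^-, theta^+) is the maximal open interval containing 0
   on which there is a unique admissible gamma *)
Definition maximal_interval (I : set R) : Prop :=
  open_itv0 I /\ unique_admissible I /\
  (forall J, open_itv0 J -> unique_admissible J -> J `<=` I).
End Mechanism.

Definition analytic_on (I : set R) (f : R -> R) : Prop :=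
  forall x0, I x0 -> exists r : R, 0 < r /\ exists c : nat -> R,
    forall x, I x -> `|x - x0| < r ->
      (fun n : nat => \sum_(0 <= k < n) c k * (x - x0) ^+ k) @ \oo --> f x.

Definition mx_analytic_on (I : set R) (M : R -> 'M[R]_3) : Prop :=
  forall i j : 'I_3, analytic_on I (fun th => M th i j).

Definition strictly_monotonic_on (I : set R) (f : R -> R) : Prop :=
  (forall x y, I x -> I y -> x < y -> f x < f y) \/
  (forall x y, I x -> I y -> x < y -> f y < f x).

Definition const_sign_on (I : set R) (f : R -> R) : Prop :=
  (forall x, I x -> 0 < f x) \/ (forall x, I x -> f x < 0).

End Defs.
Arguments e3 {R}.

(* Main.v *)
Require Import Defs.
From mathcomp Require Import all_boot all_algebra all_classical all_reals all_analysis.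
Import GRing.Theory Num.Theory numFieldTopology.Exports numFieldNormedType.Exports.
Local Open Scope ring_scope.
Local Open Scope classical_set_scope.
From mathcomp Require Import ring lra order.
Import Order.TTheory.
Set Implicit Arguments. Unset Strict Implicit.

Lemma diffs_cvg (R : realType) (c : R^nat) (K : R) : 0 < K ->
  cvgn (pseries c K) -> cvgn (pseries (pseries_diffs c) (K / 4)).
Proof.
move=> K0 Cc; have [B [_ BK]] := cvg_series_bounded Cc.
have Hb n : `|c n * K ^+ n| <= `|B| + 1.
  apply: (BK (`|B| + 1)) => //.
  by rewrite (le_lt_trans (ler_norm B))// ltrDl.
apply: normed_cvg.
apply: (@series_le_cvg _ _ (geometric ((`|B| + 1) * 2 / K) 2^-1)).
- by move=> n /=.
- move=> n; rewrite /geometric /= mulr_ge0// ?exprn_ge0 ?invr_ge0//.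
  by rewrite mulr_ge0 ?invr_ge0 ?ltW// addr_ge0.
- move=> n /=; rewrite /pseries_diffs /geometric /=.
  have e1 : `|n.+1%:R * c n.+1 * (K / 4) ^+ n| =
     n.+1%:R * (`|c n.+1 * K ^+ n.+1| / K) / 4 ^+ n.
    have hk : `|K ^+ n.+1| = K ^+ n.+1 by rewrite ger0_norm // exprn_ge0 // ltW.
    have hk' : `|(K / 4) ^+ n| = (K / 4) ^+ n.
      by rewrite ger0_norm // exprn_ge0 // divr_ge0 // ltW.
    rewrite !normrM normr_nat hk hk' exprS exprMn exprVn; field.
    by rewrite expf_neq0 //; lra.
  rewrite e1.
  have h2 : n.+1%:R <= 2 * 2 ^+ n :> R.
    rewrite -exprS -natrX ler_nat; exact: ltnW (ltn_expl _ _).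
  have h4 : (4 : R) ^+ n = 2 ^+ n * 2 ^+ n.
    by rewrite -exprMn; congr (_ ^+ _); lra.
  rewrite h4 exprVn.
  have p2 : 0 < (2 : R) ^+ n by rewrite exprn_gt0.
  rewrite ler_pdivrMr ?mulr_gt0//.
  have -> : (`|B| + 1) * 2 / K * (2 ^+ n)^-1 * (2 ^+ n * 2 ^+ n)
      = (`|B| + 1) / K * (2 * 2 ^+ n) by field; lra.
  rewrite [leLHS]mulrC; apply: ler_pM => //.
  + by rewrite divr_ge0 // ltW.
  + by rewrite ler_pM2r ?invr_gt0.
- by apply: is_cvg_geometric_series; rewrite ger0_norm ?invr_ge0 ?invf_lt1 //; lra.
Qed.


Lemma analytic_derivable (R : realType) (I : set R) (f : R -> R) :
  open I -> analytic_on I f -> forall x0, I x0 -> derivable f x0 1.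
Proof.
move=> oI af x0 Ix0.
have [r [r0 [c Hc]]] := af x0 Ix0.
have /nbhs_ballP[e /= e0 eI] := oI x0 Ix0.
pose m := Num.min r e.
have m0 : 0 < m by rewrite /m lt_min r0.
have mr : m <= r by rewrite /m ge_min lexx.
have me : m <= e by rewrite /m ge_min lexx orbT.
pose K3 := m / 2.
have K30 : 0 < K3 by rewrite divr_gt0.
have C3 : cvgn (pseries c K3).
  apply/cvg_ex; exists (f (x0 + K3)).
  have := Hc (x0 + K3).
  rewrite [x0 + K3 - x0]addrC addKr => H.
  rewrite /pseries seriesEnat; apply: H.
  - apply: eI; rewrite /ball /= opprD addrA subrr sub0r normrN gtr0_norm //.
    rewrite /K3; lra.
  - rewrite gtr0_norm // /K3; lra.
have D1 := @diffs_cvg _ _ _ K30 C3.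
have K40 : 0 < K3 / 4 by rewrite divr_gt0.
have D2 := @diffs_cvg _ _ _ K40 D1.
pose K := K3 / 4 / 4.
have K0 : 0 < K by rewrite divr_gt0.
have CK : cvgn (pseries c K).
  apply: (is_cvg_pseries_inside C3); rewrite !gtr0_norm // /K; lra.
have DK : cvgn (pseries (pseries_diffs c) K).
  apply: (is_cvg_pseries_inside D1); rewrite !gtr0_norm // /K; lra.
have hd := @pseries_snd_diffs R c K 0 CK DK D2 ltac:(by rewrite normr0 gtr0_norm).
pose g y := limn (pseries c y).
have dg : derivable (g \o shift (- x0)) x0 1.
  apply/derivable1_diffP; apply: differentiable_comp.
    by apply/derivable1_diffP; exact: (@ex_derive _ _ _ _ _ _ _ (@is_derive_shift R x0 1 (- x0))).
  rewrite /shift /= subrr; apply/derivable1_diffP.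
  by case: hd.
apply: (near_eq_derivable _ dg).
near=> x.
rewrite /= /g /shift.
have bx : ball x0 m x by near: x; exact: nbhsx_ballx.
have Ix : I x by apply: eI; apply: (le_ball me).
have hx : `|x - x0| < r.
  move: bx; rewrite /ball /= distrC => H; exact: lt_le_trans H mr.
have := Hc x Ix hx => H; apply: cvg_lim => //; rewrite /pseries seriesEnat; exact: H.
Unshelve. all: by end_near.
Qed.

Section Alg.
Variable R : realType.
Notation vec := 'cV[R]_3.

Lemma i3_10 : (inord 1 == inord 0 :> 'I_3) = false.
Proof. by apply/eqP => /(congr1 val); rewrite /= !inordK. Qed.
Lemma i3_20 : (inord 2 == inord 0 :> 'I_3) = false.
Proof. by apply/eqP => /(congr1 val); rewrite /= !inordK. Qed.
Lemma i3_21 : (inord 2 == inord 1 :> 'I_3) = false.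
Proof. by apply/eqP => /(congr1 val); rewrite /= !inordK. Qed.
Lemma i3_01 : (inord 0 == inord 1 :> 'I_3) = false.
Proof. by rewrite eq_sym i3_10. Qed.
Lemma i3_02 : (inord 0 == inord 2 :> 'I_3) = false.
Proof. by rewrite eq_sym i3_20. Qed.
Lemma i3_12 : (inord 1 == inord 2 :> 'I_3) = false.
Proof. by rewrite eq_sym i3_21. Qed.

Lemma ord3P (i : 'I_3) : [\/ i = inord 0, i = inord 1 | i = inord 2].
Proof.
case: i => -[|[|[|//]]] Hi.
- by apply: Or31; apply: val_inj; rewrite /= inordK.
- by apply: Or32; apply: val_inj; rewrite /= inordK.
- by apply: Or33; apply: val_inj; rewrite /= inordK.
Qed.

Lemma sum3 (F : 'I_3 -> R) : \sum_(i < 3) F i = F (inord 0) + F (inord 1) + F (inord 2).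
Proof.
rewrite !big_ord_recr big_ord0 /= add0r; congr (_ + _ + _); congr F; apply: val_inj;
  by rewrite /= inordK.
Qed.

Lemma vecP (a b : vec) : cx a = cx b -> cy a = cy b -> cz a = cz b -> a = b.
Proof.
move=> h0 h1 h2; apply/matrixP => i j; rewrite [j]ord1.
by case: (ord3P i) => ->.
Qed.

Lemma dotpE (a b : vec) : dotp a b = cx a * cx b + cy a * cy b + cz a * cz b.
Proof. by rewrite /dotp sum3. Qed.

Lemma crosspE (a b : vec) :
  [/\ cx (crossp a b) = cy a * cz b - cz a * cy b,
      cy (crossp a b) = cz a * cx b - cx a * cz b &
      cz (crossp a b) = cx a * cy b - cy a * cx b].
Proof.
by rewrite /cx /cy /cz !mxE eqxx i3_10 i3_20 i3_21 eqxx.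
Qed.

Lemma cxX (a b : vec) : cx (crossp a b) = cy a * cz b - cz a * cy b.
Proof. by case: (crosspE a b). Qed.
Lemma cyX (a b : vec) : cy (crossp a b) = cz a * cx b - cx a * cz b.
Proof. by case: (crosspE a b). Qed.
Lemma czX (a b : vec) : cz (crossp a b) = cx a * cy b - cy a * cx b.
Proof. by case: (crosspE a b). Qed.

Lemma cxD (a b : vec) : cx (a + b) = cx a + cx b. Proof. by rewrite /cx mxE. Qed.
Lemma cyD (a b : vec) : cy (a + b) = cy a + cy b. Proof. by rewrite /cy mxE. Qed.
Lemma czD (a b : vec) : cz (a + b) = cz a + cz b. Proof. by rewrite /cz mxE. Qed.
Lemma cxN (a : vec) : cx (- a) = - cx a. Proof. by rewrite /cx mxE. Qed.
Lemma cyN (a : vec) : cy (- a) = - cy a. Proof. by rewrite /cy mxE. Qed.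
Lemma czN (a : vec) : cz (- a) = - cz a. Proof. by rewrite /cz mxE. Qed.
Lemma cxZ k (a : vec) : cx (k *: a) = k * cx a. Proof. by rewrite /cx mxE. Qed.
Lemma cyZ k (a : vec) : cy (k *: a) = k * cy a. Proof. by rewrite /cy mxE. Qed.
Lemma czZ k (a : vec) : cz (k *: a) = k * cz a. Proof. by rewrite /cz mxE. Qed.


Notation coordE := (cxD, cyD, czD, cxN, cyN, czN, cxZ, cyZ, czZ).

Lemma tripleE (a b c : vec) : triple a b c =
  cx a * (cy b * cz c - cz b * cy c) + cy a * (cz b * cx c - cx b * cz c)
  + cz a * (cx b * cy c - cy b * cx c).
Proof. by rewrite /triple dotpE; case: (crosspE b c) => -> -> ->. Qed.


Lemma crossmxE (t : vec) (i j : 'I_3) :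
  crossmx t i j = crossp t (\col_(k < 3) (if k == j then 1 else 0)) i 0.
Proof. by rewrite /crossmx mxE. Qed.

Lemma mulmx3 (A : 'M[R]_3) (x : vec) i :
  (A *m x) i 0 = A i (inord 0) * cx x + A i (inord 1) * cy x + A i (inord 2) * cz x.
Proof. by rewrite mxE sum3. Qed.

Lemma rotE (t x : vec) phi : rotR t phi *m x =
  (vnorm t ^- 2 * dotp t x) *: t + cos phi *: (x - (vnorm t ^- 2 * dotp t x) *: t)
  + ((vnorm t)^-1 * sin phi) *: crossp t x.
Proof.
have o0 : (ord0 : 'I_1) = 0 by [].
apply: vecP; rewrite /cx /cy /cz !mulmx3 /rotR /crossmx;
rewrite !mxE /= !big_ord1 /cx /cy /cz !mxE !eqxx !i3_10 !i3_20 !i3_21 !i3_01 !i3_02 !i3_12 !dotpE /cx /cy /cz /= !o0; ring.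

Qed.


Definition rA (t x : vec) := (vnorm t ^- 2 * dotp t x) *: t.
Definition rB (t x : vec) := x - rA t x.
Definition rD (t x : vec) := (vnorm t)^-1 *: crossp t x.
Definition rotd (t x : vec) phi := - sin phi *: rB t x + cos phi *: rD t x.

Lemma dotp_ge0 (t : vec) : 0 <= dotp t t.
Proof. by rewrite dotpE -!expr2 !addr_ge0 // sqr_ge0. Qed.

Lemma vnorm2 (t : vec) : vnorm t ^+ 2 = dotp t t.
Proof. by rewrite /vnorm sqr_sqrtr // dotp_ge0. Qed.

Lemma rotE2 (t x : vec) phi : rotR t phi *m x = rA t x + cos phi *: rB t x + sin phi *: rD t x.
Proof. by rewrite rotE /rA /rB /rD scalerA [sin phi * _]mulrC. Qed.

Lemma keyE (t x : vec) phi : dotp t t != 0 ->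
  rotd t x phi = (vnorm t)^-1 *: crossp t (rotR t phi *m x).
Proof.
move=> S0.
have kk : (vnorm t)^-1 ^+ 2 = (dotp t t)^-1 by rewrite exprVn vnorm2.
rewrite rotE2 /rotd /rB /rA /rD -exprVn kk.
move: kk S0; set k := (vnorm t)^-1; move=> kk S0.
have -> : crossp t ((dotp t t)^-1 * dotp t x *: t + cos phi *: (x - (dotp t t)^-1 * dotp t x *: t)
     + sin phi *: (k *: crossp t x))
   = cos phi *: crossp t x + (sin phi * k) *: (dotp t x *: t - dotp t t *: x).
  by apply: vecP; rewrite !coordE ?cxX ?cyX ?czX !coordE ?cxX ?cyX ?czX !dotpE; ring.
rewrite [in RHS]scalerDr ![in RHS]scalerA.
have -> : k * (sin phi * k) = sin phi / dotp t t by rewrite mulrC -mulrA -expr2 kk.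
move: S0; rewrite -[dotp t t]/(dotp t t) => S0.
apply: vecP; rewrite !coordE; field => //.
Qed.


Lemma dotpC (a b : vec) : dotp a b = dotp b a.
Proof. by rewrite !dotpE; ring. Qed.

Lemma dotp_kcross k (t T y : vec) : dotp (k *: crossp t T) y = k * triple y t T.
Proof. by rewrite dotpE tripleE !coordE !cxX !cyX !czX; ring. Qed.

Lemma dotp_rotd (t x y : vec) phi : dotp t t != 0 ->
  dotp (rotd t x phi) y = (vnorm t)^-1 * triple y t (rotR t phi *m x).
Proof. by move=> S0; rewrite keyE // dotp_kcross. Qed.

Lemma dotp0 (a : vec) : dotp a a = 0 -> [/\ cx a = 0, cy a = 0 & cz a = 0].
Proof.
rewrite dotpE => h.
have h1 : 0 <= cx a * cx a by rewrite -expr2 sqr_ge0.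
have h2 : 0 <= cy a * cy a by rewrite -expr2 sqr_ge0.
have h3 : 0 <= cz a * cz a by rewrite -expr2 sqr_ge0.
have e1 : cx a * cx a = 0 by lra.
have e2 : cy a * cy a = 0 by lra.
have e3 : cz a * cz a = 0 by lra.
by split; apply/eqP; rewrite -[_ == 0]orbb -mulf_eq0; apply/eqP.
Qed.

Lemma triple_nz (a b c : vec) : triple a b c != 0 ->
  [/\ dotp a a != 0, dotp b b != 0 & dotp c c != 0].
Proof.
move=> h; split; apply/eqP => /dotp0[h1 h2 h3]; move: h; rewrite tripleE h1 h2 h3;
  by rewrite !(mul0r, mulr0, subr0, addr0) eqxx.
Qed.

Lemma dotp_mx (a b : vec) : dotp a b = (a^T *m b) 0 0.
Proof. by rewrite /dotp mxE; apply: eq_bigr => i _; rewrite mxE. Qed.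

Lemma dotp_orth (M : 'M[R]_3) (a : vec) : M^T *m M = 1%:M ->
  dotp (M *m a) (M *m a) = dotp a a.
Proof.
by move=> h; rewrite !dotp_mx trmx_mul -mulmxA (mulmxA M^T) h mul1mx.
Qed.

Lemma dotpZl k (a b : vec) : dotp (k *: a) b = k * dotp a b.
Proof. by rewrite !dotpE !coordE; ring. Qed.
Lemma dotpNl (a b : vec) : dotp (- a) b = - dotp a b.
Proof. by rewrite !dotpE !coordE; ring. Qed.

Lemma triple_alg1 k (t T y : vec) :
  - (k * triple (y - T) t T) = k * triple T t y.
Proof. by rewrite !tripleE !coordE; ring. Qed.
Lemma triple_alg2 (t1 t4 T2 : vec) : triple (T2 - t4) t1 T2 = - triple t4 t1 T2.
Proof. by rewrite !tripleE !coordE; ring. Qed.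
Lemma triple_alg3 (t1 T2 T3 : vec) : triple T3 t1 T2 = triple t1 T2 T3.
Proof. by rewrite !tripleE; ring. Qed.
Lemma triple_alg4 (t4 T2 T3 : vec) : triple T2 t4 T3 = - triple T2 T3 t4.
Proof. by rewrite !tripleE; ring. Qed.
Lemma vnorm_gt0 (t : vec) : dotp t t != 0 -> 0 < vnorm t.
Proof. by move=> h; rewrite /vnorm sqrtr_gt0 lt_def h dotp_ge0. Qed.

End Alg.

Section Der.
Variable R : realType.
Notation vec := 'cV[R]_3.
Implicit Types (f g : R -> R) (x : R).

Lemma isdD f g x df dg : is_derive x 1 f df -> is_derive x 1 g dg ->
  is_derive x 1 (fun y => f y + g y) (df + dg).
Proof. by move=> h1 h2; exact: is_deriveD. Qed.

Lemma isdB f g x df dg : is_derive x 1 f df -> is_derive x 1 g dg ->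
  is_derive x 1 (fun y => f y - g y) (df - dg).
Proof. by move=> h1 h2; exact: is_deriveB. Qed.

Lemma isdM f g x df dg : is_derive x 1 f df -> is_derive x 1 g dg ->
  is_derive x 1 (fun y => f y * g y) (df * g x + f x * dg).
Proof.
move=> h1 h2; have H := is_deriveM h1 h2.
have -> : df * g x + f x * dg = f x *: dg + g x *: df.
  by rewrite /GRing.scale /=; ring.
exact: H.
Qed.

Lemma isd_eq f x d1 d2 : is_derive x 1 f d1 -> d1 = d2 -> is_derive x 1 f d2.
Proof. by move=> h <-. Qed.

Lemma isd_dv f x d : is_derive x 1 f d -> derivable f x 1.
Proof. by case. Qed.

Lemma isdC x (a : R) : is_derive x 1 (fun _ => a) 0.
Proof. exact: is_derive_cst. Qed.

Lemma isd_comp f g x df dg : is_derive x 1 f df -> is_derive (f x) 1 g dg ->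
  is_derive x 1 (fun y => g (f y)) (dg * df).
Proof.
move=> h1 h2; have d1 : derivable f x 1 by case: h1.
have d2 : derivable g (f x) 1 by case: h2.
apply: DeriveDef.
  apply/derivable1_diffP; apply: (@differentiable_comp _ _ _ _ f g).
  - exact/derivable1_diffP.
  - exact/derivable1_diffP.
rewrite -derive1E (derive1_comp d1 d2) !derive1E !derive_val //.
Qed.

Lemma isd_trig x (a b d : R) :
  is_derive x 1 (fun p => a + cos p * b + sin p * d) (- sin x * b + cos x * d).
Proof.
have H := isdD (isdD (@isdC x a) (isdM (is_derive_cos x) (@isdC x b)))
  (isdM (is_derive_sin x) (@isdC x d)).
by apply: (isd_eq H); rewrite /=; ring.
Qed.

Lemma isd_cx (a : R -> vec) x (da : vec) :
  (forall i, is_derive x 1 (fun y => a y i 0) (da i 0)) ->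
  [/\ is_derive x 1 (fun y => cx (a y)) (cx da),
      is_derive x 1 (fun y => cy (a y)) (cy da) &
      is_derive x 1 (fun y => cz (a y)) (cz da)].
Proof. by move=> h; split; apply: h. Qed.

Lemma isd_dotp (a b : R -> vec) x (da db : vec) :
  (forall i, is_derive x 1 (fun y => a y i 0) (da i 0)) ->
  (forall i, is_derive x 1 (fun y => b y i 0) (db i 0)) ->
  is_derive x 1 (fun y => dotp (a y) (b y)) (dotp da (b x) + dotp (a x) db).
Proof.
move=> /isd_cx[ha1 ha2 ha3] /isd_cx[hb1 hb2 hb3].
have H := isdD (isdD (isdM ha1 hb1) (isdM ha2 hb2)) (isdM ha3 hb3).
have E : (fun y => dotp (a y) (b y)) = (fun y => cx (a y) * cx (b y) + cy (a y) * cy (b y) + cz (a y) * cz (b y)).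
  by apply/funext => y; rewrite dotpE.
rewrite E; apply: (isd_eq H); rewrite !dotpE; ring.
Qed.


Lemma isd_rot (t x : vec) (th : R) (i : 'I_3) :
  is_derive th 1 (fun p => (rotR t p *m x) i 0) ((rotd t x th) i 0).
Proof.
have E : (fun p => (rotR t p *m x) i 0) =
  (fun p => rA t x i 0 + cos p * rB t x i 0 + sin p * rD t x i 0).
  by apply/funext => p; rewrite rotE2 !mxE.
rewrite E; apply: (isd_eq (isd_trig _ _ _ _)).
by rewrite /rotd !mxE /= mulNr.
Qed.

Lemma isd_rotg (t x : vec) (gam : R -> R) (th dg : R) (i : 'I_3) :
  is_derive th 1 gam dg ->
  is_derive th 1 (fun p => (rotR t (gam p) *m x) i 0) ((rotd t x (gam th)) i 0 * dg).
Proof. by move=> h; apply: (isd_comp h (isd_rot _ _ _ _)). Qed.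

Lemma isd_mulmx (M : R -> 'M[R]_3) (w : R -> vec) x (dM : 'M[R]_3) (dw : vec) :
  (forall i j, is_derive x 1 (fun y => M y i j) (dM i j)) ->
  (forall j, is_derive x 1 (fun y => w y j 0) (dw j 0)) ->
  forall i, is_derive x 1 (fun y => (M y *m w y) i 0) ((dM *m w x + M x *m dw) i 0).
Proof.
move=> hM hw i.
have E : (fun y => (M y *m w y) i 0) = (fun y =>
  M y i (inord 0) * cx (w y) + M y i (inord 1) * cy (w y) + M y i (inord 2) * cz (w y)).
  by apply/funext => y; rewrite mulmx3.
rewrite E; apply: (isd_eq (isdD (isdD (isdM (hM _ _) (hw _)) (isdM (hM _ _) (hw _)))
   (isdM (hM _ _) (hw _)))).
rewrite mxE !mulmx3 /cx /cy /cz; ring.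
Qed.

Lemma derive1_vec (u : R -> vec) x (du : vec) :
  (forall i, is_derive x 1 (fun y => u y i 0) (du i 0)) -> derive1 u x = du.
Proof.
move=> h.
have hd : derivable u x 1.
  apply/derivable_mxP => i j; rewrite [j]ord1; by case: (h i).
rewrite derive1E derive_mx //; apply/matrixP => i j; rewrite mxE [j]ord1.
by case: (h i).
Qed.


Lemma const_sign_sg (I : set R) (f : R -> R) (a : R) : a != 0 ->
  (forall th, I th -> Num.sg (f th) = Num.sg a) -> const_sign_on I f.
Proof.
move=> a0 h; case: (ltrgt0P a) => ha; last by move: a0; rewrite ha eqxx.
- left => th /h; rewrite (gtr0_sg ha) => /eqP; by rewrite sgr_cp0.
- right => th /h; rewrite (ltr0_sg ha) => /eqP; by rewrite sgr_cp0.
Qed.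

Lemma strict_mono_sqrt (I : set R) (N dN : R -> R) :
  (forall x y z, I x -> I z -> x <= y -> y <= z -> I y) ->
  (forall x, I x -> is_derive x 1 N (dN x)) ->
  (forall x, I x -> 0 <= N x) -> const_sign_on I dN ->
  strictly_monotonic_on I (fun x => Num.sqrt (N x)).
Proof.
move=> cI hd hN hs.
have key : forall x y, I x -> I y -> x < y ->
    exists2 c, I c & N y - N x = dN c * (y - x).
  move=> x y Ix Iy xy.
  have Iin : forall z, z \in `[x, y]%R -> I z.
    by move=> z; rewrite in_itv /= => /andP[h1 h2]; apply: (cI x z y).
  have [c cin ce] := MVT xy (fun z zin => hd z (Iin z (subset_itv_oo_cc zin)))
     (derivable_within_continuous (fun z zin => isd_dv (hd z (Iin z zin)))).
  by exists c => //; apply: Iin; apply: subset_itv_oo_cc.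
case: hs => hs; [left|right] => x y Ix Iy xy; have [c Ic e] := key x y Ix Iy xy.
- have : N x < N y.
    by rewrite -subr_gt0 e mulr_gt0 // ?hs // subr_gt0.
  move=> Nxy; rewrite ltr_sqrt //; exact: le_lt_trans (hN x Ix) Nxy.
- have : N y < N x.
    by rewrite -subr_lt0 e nmulr_rlt0 ?hs // subr_gt0.
  move=> Nxy; rewrite ltr_sqrt //; exact: le_lt_trans (hN y Iy) Nxy.
Qed.


Lemma const_sign2 (I : set R) (f : R -> R) : const_sign_on I f ->
  const_sign_on I (fun x => 2 * f x).
Proof.
case=> h; [left|right] => x /h hx; first by rewrite mulr_gt0.
by rewrite pmulr_rlt0.
Qed.

Lemma dotp_deriv_orth (I : set R) (M : R -> 'M[R]_3) (w : R -> vec) th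
    (dM : 'M[R]_3) (dw : vec) :
  open I -> I th -> (forall p, I p -> (M p)^T *m M p = 1%:M) ->
  (forall i j, is_derive th 1 (fun p => M p i j) (dM i j)) ->
  (forall j, is_derive th 1 (fun p => w p j 0) (dw j 0)) ->
  (forall i, is_derive th 1 (fun p => (M p *m w p) i 0)
       ((derive1 (fun p => M p *m w p) th) i 0)) /\
  dotp (derive1 (fun p => M p *m w p) th) (M th *m w th) = dotp dw (w th).
Proof.
move=> oI Ith hO hM hw.
have hU := isd_mulmx hM hw.
have dU := derive1_vec hU.
split; first by rewrite dU.
rewrite dU.
have hN := isd_dotp hU hU.
have hW := isd_dotp hw hw.
have hW' : is_derive th 1 (fun p => dotp (M p *m w p) (M p *m w p))
    (dotp dw (w th) + dotp (w th) dw).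
  apply: (near_eq_is_derive _ hW).
  near=> p.
  have Ip : I p by near: p; exact: oI.
  by rewrite dotp_orth // hO.
case: hN => _ e1; case: hW' => _ e2.
rewrite e1 in e2.
move: e2; rewrite (dotpC (w th)) (dotpC (M th *m w th)) => e2.
lra.
Unshelve. all: by end_near.
Qed.

End Der.

Lemma sg_sq (R : realType) (x : R) : x != 0 -> Num.sg x * Num.sg x = 1.
Proof.
move=> x0; case: (ltrgt0P x) => h.
- by rewrite gtr0_sg // mulr1.
- by rewrite ltr0_sg // mulrNN mulr1.
- by move: x0; rewrite h eqxx.
Qed.

Unset Implicit Arguments.
Theorem mainTheorem5 (R : realType) (t1r t2r t3r t4r : 'cV[R]_3)
  (I : set R) (gamma : R -> R) (R0 : R -> 'M[R]_3) :
  triple t1r t2r t3r != 0 -> triple t2r t3r t4r != 0 ->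
  triple t3r t4r t1r != 0 -> triple t4r t1r t2r != 0 ->
  conv3 0 t1r t2r `&` conv3 0 t3r t4r = [set 0] ->
  conv3 0 t1r t4r `&` conv3 0 t2r t3r = [set 0] ->
  dotp (t1r - t3r) e3 = 0 -> dotp (t2r - t4r) e3 = 0 ->
  0 < dotp e3 (crossp (t1r - t3r) (t2r - t4r)) ->
  maximal_interval t1r t2r t3r t4r I ->
  admissible t1r t2r t3r t4r I gamma ->
  mx_analytic_on I R0 -> (forall th, I th -> isSO3 (R0 th)) -> R0 0 = 1%:M ->
  let t1 th := R0 th *m t1r in
  let t2 th := R0 th *m t2d t1r t2r (gamma th) in
  let t3 th := R0 th *m t3d t3r t4r th in
  let t4 th := R0 th *m t4r in
  let u th := t1 th - t3 th in
  let v th := t2 th - t4 th in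
  (forall th, I th ->
     dotp e3 (u th) = 0 /\ dotp e3 (v th) = 0 /\ 0 < dotp e3 (crossp (u th) (v th))) ->
  const_sign_on I (fun th => dotp (derive1 u th) (u th)) /\
  const_sign_on I (fun th => dotp (derive1 v th) (v th)) /\
  strictly_monotonic_on I (fun th => vnorm (u th)) /\
  strictly_monotonic_on I (fun th => vnorm (v th)).
Proof.
move=> h123 h234 h341 h412 _ _ _ _ _ [[oI [_ cI]] _] [[hgd _] [_ hgam]] han hSO _.
move=> t1 t2 t3 t4 u v _.
have [_ _ S4] := triple_nz h234.
have [_ S1 _] := triple_nz h412.
have hO : forall p, I p -> (R0 p)^T *m R0 p = 1%:M by move=> p /hSO[].
pose dR th := \matrix_(i < 3, j < 3) 'D_1 (fun p => R0 p i j) th.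
have hR : forall th, I th -> forall i j,
    is_derive th 1 (fun p => R0 p i j) (dR th i j).
  move=> th Ith i j; rewrite mxE; apply: DeriveDef => //.
  exact: (analytic_derivable oI (han i j)).
have uE : u = (fun p => R0 p *m (t1r - t3d t3r t4r p)).
  by apply/funext => p; rewrite /u /t1 /t3 mulmxBr.
have vE : v = (fun p => R0 p *m (t2d t1r t2r (gamma p) - t4r)).
  by apply/funext => p; rewrite /v /t2 /t4 mulmxBr.
have hw : forall (th : R) (i : 'I_3), is_derive th 1 (fun p => (t1r - t3d t3r t4r p) i 0)
     ((- rotd t4r t3r th) i 0).
  move=> th i.
  have E : (fun p => (t1r - t3d t3r t4r p) i 0) =
     (fun p => t1r i 0 - (rotR t4r p *m t3r) i 0).
    by apply/funext => p; rewrite !mxE.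
  rewrite E; apply: (isd_eq (isdB (@isdC _ th (t1r i 0)) (isd_rot _ _ _ _))).
  by rewrite sub0r [RHS]mxE.

have k4p : 0 < (vnorm t4r)^-1 by rewrite invr_gt0 vnorm_gt0.
have k1p : 0 < (vnorm t1r)^-1 by rewrite invr_gt0 vnorm_gt0.
have hUth : forall th, I th ->
    (forall i, is_derive th 1 (fun p => u p i 0) ((derive1 u th) i 0)) /\
    dotp (derive1 u th) (u th) = dotp (- rotd t4r t3r th) (t1r - t3d t3r t4r th).
  by move=> th Ith; rewrite uE; exact: (dotp_deriv_orth oI Ith hO (hR th Ith) (hw th)).
have hUval : forall th, I th -> dotp (derive1 u th) (u th) =
    (vnorm t4r)^-1 * triple (t3d t3r t4r th) t4r t1r.
  move=> th Ith; rewrite (hUth th Ith).2 dotpNl dotp_rotd //.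
  exact: triple_alg1.
have hsp : forall th, I th ->
   [/\ Num.sg (triple t1r (t2d t1r t2r (gamma th)) (t3d t3r t4r th)) = Num.sg (triple t1r t2r t3r),
       Num.sg (triple (t2d t1r t2r (gamma th)) (t3d t3r t4r th) t4r) = Num.sg (triple t2r t3r t4r),
       Num.sg (triple (t3d t3r t4r th) t4r t1r) = Num.sg (triple t3r t4r t1r) &
       Num.sg (triple t4r t1r (t2d t1r t2r (gamma th))) = Num.sg (triple t4r t1r t2r)].
  move=> th Ith; have [_ sp] := hgam th Ith; move: sp; rewrite /sign_pattern.
  by case=> -> -> -> ->.
have csU : const_sign_on I (fun th => dotp (derive1 u th) (u th)).
  apply: (@const_sign_sg _ _ _ ((vnorm t4r)^-1 * triple t3r t4r t1r)).
    by rewrite mulf_neq0 // gt_eqF.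
  move=> th Ith; rewrite hUval // !sgrM.
  by have [_ _ -> _] := hsp th Ith.

pose g' th := 'D_1 gamma th.
have hg : forall th, I th -> is_derive th 1 gamma (g' th).
  by move=> th Ith; apply: DeriveDef => //; exact: hgd.
have hT2 : forall th, I th -> forall i : 'I_3,
    is_derive th 1 (fun p => (t2d t1r t2r (gamma p)) i 0)
      ((g' th *: rotd t1r t2r (gamma th)) i 0).
  move=> th Ith i; have H := isd_rotg t1r t2r i (hg th Ith).
  rewrite /t2d; apply: (isd_eq H).
  by rewrite [RHS]mxE mulrC.
have hz : forall th, I th -> forall i : 'I_3,
    is_derive th 1 (fun p => (t2d t1r t2r (gamma p) - t4r) i 0)
      ((g' th *: rotd t1r t2r (gamma th)) i 0).
  move=> th Ith i.
  have E : (fun p => (t2d t1r t2r (gamma p) - t4r) i 0) =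
     (fun p => (t2d t1r t2r (gamma p)) i 0 - t4r i 0).
    by apply/funext => p; rewrite !mxE.
  rewrite E; apply: (isd_eq (isdB (hT2 th Ith i) (@isdC _ th (t4r i 0)))).
  by rewrite subr0.
have hT3 : forall (th : R) (i : 'I_3),
    is_derive th 1 (fun p => (t3d t3r t4r p) i 0) ((rotd t4r t3r th) i 0).
  by move=> th i; exact: isd_rot.
have hVth : forall th, I th ->
    (forall i, is_derive th 1 (fun p => v p i 0) ((derive1 v th) i 0)) /\
    dotp (derive1 v th) (v th) =
    dotp (g' th *: rotd t1r t2r (gamma th)) (t2d t1r t2r (gamma th) - t4r).
  by move=> th Ith; rewrite vE; exact: (dotp_deriv_orth oI Ith hO (hR th Ith) (hz th Ith)).
have hC : forall th, I th ->
    0 = dotp (g' th *: rotd t1r t2r (gamma th)) (t3d t3r t4r th)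
        + dotp (t2d t1r t2r (gamma th)) (rotd t4r t3r th).
  move=> th Ith.
  have H := isd_dotp (hT2 th Ith) (hT3 th).
  have H0 : is_derive th 1 (fun p => dotp (t2d t1r t2r (gamma p)) (t3d t3r t4r p)) 0.
    apply: (near_eq_is_derive _ (@isdC _ th (dotp t2r t3r))).
    near=> p.
    have Ip : I p by near: p; exact: oI.
    by have [-> _] := hgam p Ip.
  case: H => _ e1; case: H0 => _ e2; rewrite e1 in e2; by rewrite e2.
have csV : const_sign_on I (fun th => dotp (derive1 v th) (v th)).
  apply: (@const_sign_sg _ _ _
     (- (triple t2r t3r t4r * triple t4r t1r t2r * triple t1r t2r t3r))).
    by rewrite oppr_eq0 !mulf_neq0.
  move=> th Ith.
  have [sA sB _ sD] := hsp th Ith.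
  set T2 := t2d t1r t2r (gamma th) in sA sB sD.
  set T3 := t3d t3r t4r th in sA sB sD.
  have Cth : 0 = g' th * ((vnorm t1r)^-1 * triple T3 t1r T2)
      + (vnorm t4r)^-1 * triple T2 t4r T3.
    by rewrite (hC th Ith) dotpZl dotp_rotd // (dotpC T2) dotp_rotd.
  have hf : dotp (derive1 v th) (v th) =
      g' th * ((vnorm t1r)^-1 * triple (T2 - t4r) t1r T2).
    by rewrite (hVth th Ith).2 dotpZl dotp_rotd.
  rewrite hf triple_alg2.
  rewrite (triple_alg3 t1r T2 T3) (triple_alg4 t4r T2 T3) in Cth.
  set A := triple t1r T2 T3 in sA Cth *.
  set B := triple T2 T3 t4r in sB Cth *.
  set D := triple t4r t1r T2 in sD *.
  set g := g' th in Cth *.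
  set k1 := (vnorm t1r)^-1 in k1p Cth *.
  set k4 := (vnorm t4r)^-1 in k4p Cth *.
  have e : g * (k1 * A) = k4 * B.
    have e0 : g * (k1 * A) = k4 * B + (g * (k1 * A) + k4 * - B) by ring.
    by rewrite -Cth addr0 in e0.
  have key : g * (k1 * - D) * A = - (k4 * B * D).
    transitivity (- (g * (k1 * A)) * D); first by ring.
    by rewrite e; ring.
  have A0 : A != 0.
    apply/negP => /eqP A0; move: sA; rewrite A0 sgr0 => /esym/eqP.
    by rewrite sgr_eq0 (negbTE h123).
  set f := g * (k1 * - D) in key *.
  have hk : Num.sg f * Num.sg A = - (Num.sg B * Num.sg D).
    have := congr1 Num.sg key.
    rewrite [LHS]sgrM [RHS]sgrN !sgrM (gtr0_sg k4p) mul1r => ->.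
    by [].
  rewrite -[LHS]mulr1 -(sg_sq A0) mulrA hk sB sD sA sgrN !sgrM; ring.
split; first exact: csU.
split; first exact: csV.
split.
- apply: (@strict_mono_sqrt _ I (fun p => dotp (u p) (u p))
           (fun p => 2 * dotp (derive1 u p) (u p))) => //.
  + move=> x Ix; have [h _] := hUth x Ix.
    apply: (isd_eq (isd_dotp h h)); rewrite (dotpC (u x)); ring.
  + by move=> x _; exact: dotp_ge0.
  + exact: const_sign2.
- apply: (@strict_mono_sqrt _ I (fun p => dotp (v p) (v p))
           (fun p => 2 * dotp (derive1 v p) (v p))) => //.
  + move=> x Ix; have [h _] := hVth x Ix.
    apply: (isd_eq (isd_dotp h h)); rewrite (dotpC (v x)); ring.
  + by move=> x _; exact: dotp_ge0.
  + exact: const_sign2.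
Unshelve. all: by end_near.
Qed.
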